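(* Let $(\mathcal{S},\widehat{\mathcal{S}},\sigma,\tau,\iota)$ be a duplicated category of sets and let $A$ be an object of $\mathcal{S}$. Every global element $x:1=\tau(1)\to\tau(A)$ in $\widehat{\mathcal{S}}$ is internal. Consequently, every global element of $\tau(A)$ is either standard or nonstandard.
   Context: A duplicated category of sets is a quintet $(\mathcal{S},\widehat{\mathcal{S}},\sigma,\tau,\iota)$ such that: (i) $\mathcal{S}$ and $\widehat{\mathcal{S}}$ are categories satisfying Lawvere's axioms of the Elementary Theory of the Category of Sets (ETCS), i.e. each is a well-pointed topos with a natural numbers object satisfying the axiom of choice; (ii) $\sigma:\mathcal{S}\to\widehat{\mathcal{S}}$ is a functor preserving all finite limits, the subobject classifier $2$, exponentials and natural numbers objects; (iii) $\tau:\mathcal{S}\to\widehat{\mathcal{S}}$ is a functor preserving all finite limits; (iv) $\iota:\sigma\to\tau$ is a natural transformation such that $\iota_X=\mathrm{id}_{\sigma(X)}=\mathrm{id}_{\tau(X)}$ for every finite object $X$ of $\mathcal{S}$ (so $\sigma(1)=\tau(1)=1$). For objects $A,B$ of $\mathcal{S}$, $\kappa_{A,B}:\tau(B^A)\to\tau(B)^{\tau(A)}$ is the exponential transpose of $\tau(A)\times\tau(B^A)\cong\tau(A\times B^A)\xrightarrow{\tau(ev_{A,B})}\tau(B)$, where $ev_{A,B}:A\times B^A\to B$ is evaluation. A morphism $F:\tau(A)\to\tau(B)$ in $\widehat{\mathcal{S}}$, with name $\widehat{F}:1\to\tau(B)^{\tau(A)}$, is called standard if $\widehat{F}$ factors through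 $\kappa_{A,B}\circ\iota_{B^A}:\sigma(B^A)\to\tau(B)^{\tau(A)}$, internal if $\widehat{F}$ factors through $\kappa_{A,B}$, external if it is not internal, and nonstandard if it is internal but not standard. A global element $x:1\to\tau(A)$ is regarded as a morphism $\tau(1)\to\tau(A)$ for these notions (with $A$ in place of $B$ and $1$ in place of $A$). *)

(* Defs.v *)
Set Implicit Arguments.
Unset Strict Implicit.

Record Cat : Type := {
  Ob :> Type;
  Hom : Ob -> Ob -> Type;
  idm : forall A, Hom A A;
  comp : forall A B C, Hom B C -> Hom A B -> Hom A C;
  comp_id_l : forall A B (f : Hom A B), comp (idm B) f = f;
  comp_id_r : forall A B (f : Hom A B), comp f (idm A) = f;
  comp_assoc : forall A B C D (f : Hom A B) (g : Hom B C) (h : Hom C D),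
      comp h (comp g f) = comp (comp h g) f
}.
Arguments Hom {c} _ _.
Arguments idm {c} A.
Arguments comp {c A B C} _ _.

Section CatDefs.
Context {C : Cat}.

Definition is_mono {A B : C} (m : Hom A B) : Prop :=
  forall X (f g : Hom X A), comp m f = comp m g -> f = g.

Definition is_epi {A B : C} (e : Hom A B) : Prop :=
  forall Y (f g : Hom B Y), comp f e = comp g e -> f = g.

Definition is_iso {A B : C} (f : Hom A B) : Prop :=
  exists g : Hom B A, comp g f = idm A /\ comp f g = idm B.

Definition is_terminal (T : C) : Prop :=
  forall X : C, exists! f : Hom X T, True.

Definition is_product {A B P : C} (p1 : Hom P A) (p2 : Hom P B) : Prop :=
  forall X (f : Hom X A) (g : Hom X B),
    exists! h : Hom X P, comp p1 h = f /\ comp p2 h = g.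

Definition is_equalizer {E X Y : C} (e : Hom E X) (f g : Hom X Y) : Prop :=
  comp f e = comp g e /\
  forall Z (h : Hom Z X), comp f h = comp g h ->
    exists! u : Hom Z E, comp e u = h.

Definition is_pullback {P X Y Z : C} (p1 : Hom P X) (p2 : Hom P Y)
    (f : Hom X Z) (g : Hom Y Z) : Prop :=
  comp f p1 = comp g p2 /\
  forall Q (q1 : Hom Q X) (q2 : Hom Q Y), comp f q1 = comp g q2 ->
    exists! u : Hom Q P, comp p1 u = q1 /\ comp p2 u = q2.

Definition is_subobject_classifier {T O : C} (t : Hom T O) : Prop :=
  is_terminal T /\
  forall U X (m : Hom U X), is_mono m ->
    exists! chi : Hom X O, forall u : Hom U T, is_pullback m u chi t.

Definition is_nno {T N : C} (z : Hom T N) (s : Hom N N) : Prop :=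
  is_terminal T /\
  forall X (x : Hom T X) (f : Hom X X),
    exists! h : Hom N X, comp h z = x /\ comp h s = comp f h.

(** [E] is the exponential [B^A] with evaluation [e : P -> B], where
    [P] (with projections [p1], [p2]) is a product [A x E]:
    for every product [Q = A x C] and [g : Q -> B] there is a unique
    [h : C -> E] with [e o (id x h) = g]. *)
Definition is_exponential {A B E P : C} (p1 : Hom P A) (p2 : Hom P E)
    (e : Hom P B) : Prop :=
  is_product p1 p2 /\
  forall Q (D : C) (q1 : Hom Q A) (q2 : Hom Q D) (g : Hom Q B),
    is_product q1 q2 ->
    exists! h : Hom D E, forall k : Hom Q P,
      comp p1 k = q1 -> comp p2 k = comp h q2 -> comp e k = g.

Definition is_finite (X : C) : Prop :=
  forall m : Hom X X, is_mono m -> is_iso m.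

End CatDefs.

Record ETCS : Type := {
  ecat :> Cat;
  one : ecat;
  one_terminal : is_terminal one;
  prod : ecat -> ecat -> ecat;
  pr1 : forall A B, Hom (prod A B) A;
  pr2 : forall A B, Hom (prod A B) B;
  prod_ok : forall A B, is_product (pr1 A B) (pr2 A B);
  equalizers : forall (X Y : ecat) (f g : Hom X Y),
      exists (E : ecat) (e : Hom E X), is_equalizer e f g;
  (* exp A B is B^A, ev A B : A x B^A -> B *)
  exp : ecat -> ecat -> ecat;
  ev : forall A B, Hom (prod A (exp A B)) B;
  exp_ok : forall A B, is_exponential (pr1 A (exp A B)) (pr2 A (exp A B)) (ev A B);
  omega : ecat;
  tru : Hom one omega;
  omega_ok : is_subobject_classifier tru;
  nno : ecat;
  zero : Hom one nno;
  succ : Hom nno nno;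
  nno_ok : is_nno zero succ;
  well_pointed : forall (X Y : ecat) (f g : Hom X Y),
      (forall x : Hom one X, comp f x = comp g x) -> f = g;
  nondegenerate : exists (X : ecat) (x y : Hom one X), x <> y;
  choice : forall (X Y : ecat) (e : Hom X Y), is_epi e ->
      exists s : Hom Y X, comp e s = idm Y
}.
Arguments one {e0}.
Arguments prod {e0} _ _.
Arguments pr1 {e0 A B}.
Arguments pr2 {e0 A B}.
Arguments exp {e0} _ _.
Arguments ev {e0 A B}.
Arguments omega {e0}.
Arguments tru {e0}.
Arguments nno {e0}.
Arguments zero {e0}.
Arguments succ {e0}.

Record Functor (C D : Cat) : Type := {
  fobj : C -> D;
  fmap : forall A B : C, Hom A B -> Hom (fobj A) (fobj B);
  fmap_id : forall A : C, fmap (idm A) = idm (fobj A);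
  fmap_comp : forall (A B E : C) (f : Hom A B) (g : Hom B E),
      fmap (comp g f) = comp (fmap g) (fmap f)
}.
Arguments fobj {C D} f0 _.
Arguments fmap {C D} f0 {A B} _.

Record NatTrans {C D : Cat} (F G : Functor C D) : Type := {
  ntc : forall X : C, Hom (fobj F X) (fobj G X);
  nt_natural : forall (X Y : C) (f : Hom X Y),
      comp (ntc Y) (fmap F f) = comp (fmap G f) (ntc X)
}.
Arguments ntc {C D F G} n X.

Section Preservation.
Context {C D : Cat} (F : Functor C D).

Definition preserves_finite_limits : Prop :=
  (forall T : C, is_terminal T -> is_terminal (fobj F T)) /\
  (forall (A B P : C) (p1 : Hom P A) (p2 : Hom P B),
      is_product p1 p2 -> is_product (fmap F p1) (fmap F p2)) /\
  (forall (E X Y : C) (e : Hom E X) (f g : Hom X Y),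
      is_equalizer e f g -> is_equalizer (fmap F e) (fmap F f) (fmap F g)).

Definition preserves_subobject_classifier : Prop :=
  forall (T O : C) (t : Hom T O),
    is_subobject_classifier t -> is_subobject_classifier (fmap F t).

Definition preserves_exponentials : Prop :=
  forall (A B E P : C) (p1 : Hom P A) (p2 : Hom P E) (e : Hom P B),
    is_exponential p1 p2 e -> is_exponential (fmap F p1) (fmap F p2) (fmap F e).

Definition preserves_nno : Prop :=
  forall (T N : C) (z : Hom T N) (s : Hom N N),
    is_nno z s -> is_nno (fmap F z) (fmap F s).

End Preservation.

Record Duplicated : Type := {
  dS : ETCS;
  dSh : ETCS;
  sigma : Functor dS dSh;
  tau : Functor dS dSh;
  iota : NatTrans sigma tau;
  sigma_lim : preserves_finite_limits sigma;
  sigma_omega : preserves_subobject_classifier sigma;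
  sigma_exp : preserves_exponentials sigma;
  sigma_nno : preserves_nno sigma;
  tau_lim : preserves_finite_limits tau;
  iota_finite : forall X : dS, is_finite X ->
    exists e : fobj sigma X = fobj tau X,
      ntc iota X = match e in _ = Y return Hom (fobj sigma X) Y with
                   | eq_refl => idm (fobj sigma X) end
}.

Section Standardness.
Variable D : Duplicated.
Let S := dS D.
Let Sh := dSh D.
Let t := tau D.
Let s := sigma D.

(** [k] is kappa_{A,B} : tau(B^A) -> tau(B)^tau(A), the transpose of
    tau(A) x tau(B^A) ~= tau(A x B^A) --tau(ev)--> tau(B); equivalently
    ev o (id x k) o <tau pr1, tau pr2> = tau(ev). *)
Definition is_kappa (A B : S)
    (k : Hom (fobj t (exp A B)) (@exp Sh (fobj t A) (fobj t B))) : Prop :=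
  forall h : Hom (fobj t (prod A (exp A B)))
                 (@prod Sh (fobj t A) (@exp Sh (fobj t A) (fobj t B))),
    comp pr1 h = fmap t pr1 -> comp pr2 h = comp k (fmap t pr2) ->
    comp ev h = fmap t (@ev S A B).

(** [n : 1 -> tau(B)^tau(A)] is the name of [F : tau(A) -> tau(B)], i.e. the
    transpose of [F o pr1 : tau(A) x 1 -> tau(B)]. *)
Definition is_name {A B : S} (F : Hom (fobj t A) (fobj t B))
    (n : Hom (@one Sh) (@exp Sh (fobj t A) (fobj t B))) : Prop :=
  forall h : Hom (@prod Sh (fobj t A) (@one Sh))
                 (@prod Sh (fobj t A) (@exp Sh (fobj t A) (fobj t B))),
    comp pr1 h = pr1 -> comp pr2 h = comp n pr2 ->
    comp ev h = comp F pr1.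

Definition is_standard {A B : S} (F : Hom (fobj t A) (fobj t B)) : Prop :=
  exists n k (y : Hom (@one Sh) (fobj s (exp A B))),
    is_name F n /\ is_kappa k /\ n = comp k (comp (ntc (iota D) (exp A B)) y).

Definition is_internal {A B : S} (F : Hom (fobj t A) (fobj t B)) : Prop :=
  exists n k (y : Hom (@one Sh) (fobj t (exp A B))),
    is_name F n /\ is_kappa k /\ n = comp k y.

Definition is_external {A B : S} (F : Hom (fobj t A) (fobj t B)) : Prop :=
  ~ is_internal F.

Definition is_nonstandard {A B : S} (F : Hom (fobj t A) (fobj t B)) : Prop :=
  is_internal F /\ ~ is_standard F.

(** A global element [x : 1 -> tau(A)] regarded as the morphism
    [x o u : tau(1) -> tau(A)], with [u : tau(1) -> 1] the (unique) map. *)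
Definition ge_standard {A : S} (x : Hom (@one Sh) (fobj t A)) : Prop :=
  exists u : Hom (fobj t (@one S)) (@one Sh), is_standard (comp x u).

Definition ge_internal {A : S} (x : Hom (@one Sh) (fobj t A)) : Prop :=
  exists u : Hom (fobj t (@one S)) (@one Sh), is_internal (comp x u).

Definition ge_nonstandard {A : S} (x : Hom (@one Sh) (fobj t A)) : Prop :=
  exists u : Hom (fobj t (@one S)) (@one Sh), is_nonstandard (comp x u).

End Standardness.

Arguments ge_standard D {A} x.
Arguments ge_internal D {A} x.
Arguments ge_nonstandard D {A} x.

(* Main.v *)
Require Import Defs.
From Stdlib Require Import Classical.

Lemma term_eq (E : ETCS) (X : E) (f g : Hom X (@one E)) : f = g.
Proof.
  destruct (@one_terminal E X) as [h [_ Hh]].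
  rewrite <- (Hh f I), <- (Hh g I); reflexivity.
Qed.

Lemma internal_all (D : Duplicated) (A : dS D)
    (x : Hom (@one (dSh D)) (fobj (tau D) A))
    (u : Hom (fobj (tau D) (@one (dS D))) (@one (dSh D))) :
  @is_internal D _ _ (comp x u).
Proof.
  destruct (@exp_ok (dS D) one A) as [_ HexS].
  destruct (HexS (prod one A) A pr1 pr2 pr2 (@prod_ok (dS D) one A)) as [m [Hm _]].
  destruct (@prod_ok (dS D) one (exp one A) (prod one A) pr1 (comp m pr2))
    as [im [[Him1 Him2] _]].
  pose proof (Hm im Him1 Him2) as Hevim.
  destruct (tau_lim D) as [_ [Htp _]].
  pose proof (Htp _ _ _ _ _ (@prod_ok (dS D) one (exp one A))) as HtP.
  pose proof (Htp _ _ _ _ _ (@prod_ok (dS D) one A)) as HtP2.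
  destruct (@exp_ok (dSh D) (fobj (tau D) one) (fobj (tau D) A)) as [_ HexSh].
  destruct (HexSh _ _ _ _ (fmap (tau D) ev) HtP) as [k [Hk _]].
  exists (comp k (comp (fmap (tau D) m) x)), k, (comp (fmap (tau D) m) x).
  split; [|split; [exact Hk | reflexivity]].
  intros h Hh1 Hh2.
  destruct (HtP2 (@prod (dSh D) (fobj (tau D) one) one) pr1 (comp x pr2))
    as [K [[HK1 HK2] _]].
  destruct (@prod_ok (dSh D) _ _ (fobj (tau D) (prod one (exp one A)))
              (fmap (tau D) pr1) (comp k (fmap (tau D) pr2))) as [h0 [[H01 H02] _]].
  pose proof (Hk h0 H01 H02) as Hev.
  assert (Hh : h = comp h0 (comp (fmap (tau D) im) K)).
  { destruct (@prod_ok (dSh D) _ _ (@prod (dSh D) (fobj (tau D) one) one) pr1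
                (comp (comp k (comp (fmap (tau D) m) x)) pr2)) as [h1 [_ Hu]].
    transitivity h1.
    - symmetry; apply Hu; split; assumption.
    - apply Hu; split.
      + rewrite comp_assoc, H01, comp_assoc, <- fmap_comp, Him1. exact HK1.
      + rewrite comp_assoc, H02, <- !comp_assoc. f_equal.
        rewrite (comp_assoc K (fmap (tau D) im) (fmap (tau D) pr2)), <- fmap_comp, Him2, fmap_comp, <- comp_assoc, HK2.
        reflexivity. }
  subst h.
  rewrite comp_assoc, Hev, comp_assoc, <- fmap_comp, Hevim, HK2.
  rewrite <- comp_assoc. f_equal. apply term_eq.
Qed.

Theorem mainTheorem5 (D : Duplicated) (A : dS D)
    (x : Hom (@one (dSh D)) (fobj (tau D) A)) :
  ge_internal D x /\ (ge_standard D x \/ ge_nonstandard D x).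
Proof.
  destruct (@one_terminal (dSh D) (fobj (tau D) (@one (dS D)))) as [u _].
  split.
  - exists u. apply internal_all.
  - destruct (classic (ge_standard D x)) as [Hs|Hs]; [left; exact Hs|right].
    exists u. split; [apply internal_all|].
    intro H. apply Hs. exists u. exact H.
Qed.
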